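(* Every finite solvable group has the eigenvalue one property.
   Context: A finite group $K$ has the eigenvalue one property if for every irreducible non-trivial $\mathbb{R}K$-module $W$ of odd dimension, affording $\sigma\colon K\to\mathrm{GL}(W)$, and every $m\in N_{\mathrm{GL}(W)}(\sigma(K))$ of finite order, there is $k\in K$ such that $\sigma(k)m$ has eigenvalue $1$. *)

(* Defs.v *)
From HB Require Import structures.
From mathcomp Require Import all_boot all_order all_algebra all_fingroup all_solvable.
From mathcomp Require Import mxrepresentation.
From mathcomp Require Import reals.
Set Implicit Arguments. Unset Strict Implicit. Unset Printing Implicit Defensive.
Import GRing.Theory Num.Theory.
Local Open Scope ring_scope.

(* The eigenvalue one property for a finite group K (here the group G of
   elements of gT), with R a model of the real numbers.  An RK-module W of
   dimension d = n.+1 is given by a matrix representation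
   sigma : K -> GL_d(R).  Odd dimension forces d >= 1, so writing d = n.+1
   loses nothing. *)
Definition eigenvalue_one_property (R : realType) (gT : finGroupType)
    (G : {group gT}) : Prop :=
  forall (n : nat) (sigma : mx_representation R G n.+1),
    odd n.+1 ->
    mx_irreducible sigma ->
    (exists2 g, g \in G & sigma g != 1%:M) ->
    forall m : 'M[R]_n.+1,
      m \in unitmx ->
      (forall g, g \in G -> exists2 h, h \in G & m *m sigma g *m invmx m = sigma h) ->
      (forall h, h \in G -> exists2 g, g \in G & m *m sigma g *m invmx m = sigma h) ->
      (exists2 k : nat, (0 < k)%N & m ^+ k = 1) ->
      exists2 k, k \in G & eigenvalue (sigma k *m m) 1.

(* Main.v *)
Require Import Defs.
From HB Require Import structures.
From mathcomp Require Import all_boot all_order all_algebra all_fingroup all_solvable.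
From mathcomp Require Import mxrepresentation reals boolp.
From mathcomp Require Import polyrcf.
Set Implicit Arguments. Unset Strict Implicit. Unset Printing Implicit Defensive.
Import GRing.Theory Num.Theory.
Local Open Scope ring_scope.

Section S.
Variable R : realType.

Lemma odd_eig (r : nat) (B : 'M[R]_r) k : odd r -> (0 < k)%N -> B ^+ k = 1 ->
  eigenvalue B 1 \/ eigenvalue B (-1).
Proof.
move=> oddr k0 Bk.
have [x rx] : {x | root (char_poly B) x}.
  by apply: odd_poly_root; rewrite size_char_poly /= negbK.
have : eigenvalue B x by rewrite eigenvalue_root_char.
move/eigenvalueP => [v vB vn0].
have vBk : forall j, v *m B ^+ j = x ^+ j *: v.
  elim=> [|j IH]; first by rewrite expr0 mulmx1 scale1r.
  by rewrite exprSr -mulmxE mulmxA IH -scalemxAl vB scalerA -exprSr.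
have xk : x ^+ k = 1.
  have := vBk k; rewrite Bk mulmx1 => /eqP; rewrite -subr_eq0 -{1}(scale1r v) -scalerBl.
  by rewrite scaler_eq0 (negbTE vn0) orbF subr_eq0 => /eqP <-.
have nx : `|x| = 1.
  by apply/eqP; rewrite -(pexpr_eq1 k0) ?normr_ge0 // -normrX xk normr1.
case: (real_ltgtP (num_real x) (num_real 0)) => [xl|xg|x0].
- right; apply/eigenvalueP; exists v => //; rewrite vB.
  by rewrite ltr0_norm // in nx; rewrite -nx opprK.
- left; apply/eigenvalueP; exists v => //; rewrite vB.
  by rewrite gtr0_norm // in nx; rewrite nx.
- by rewrite x0 normr0 in nx; move/eqP: nx; rewrite eq_sym oner_eq0.
Qed.

Lemma mxmodule_transfer gT1 gT2 (G1 : {group gT1}) (G2 : {group gT2}) n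
  (r1 : mx_representation R G1 n) (r2 : mx_representation R G2 n) (U : 'M_n) :
  (forall y, y \in G2 -> exists2 x, x \in G1 & r1 x = r2 y) ->
  mxmodule r1 U -> mxmodule r2 U.
Proof.
move=> h21 /mxmoduleP m1; apply/mxmoduleP => y Gy.
by have [x Gx <-] := h21 y Gy; apply: m1.
Qed.

Lemma irr_transfer gT1 gT2 (G1 : {group gT1}) (G2 : {group gT2}) n
  (r1 : mx_representation R G1 n) (r2 : mx_representation R G2 n) :
  (forall x, x \in G1 -> exists2 y, y \in G2 & r1 x = r2 y) ->
  (forall y, y \in G2 -> exists2 x, x \in G1 & r1 x = r2 y) ->
  mx_irreducible r1 -> mx_irreducible r2.
Proof.
move=> h12 h21 [m1 nz1 s1]; split => //.
  exact: mxmodule_transfer h21 m1.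
move=> U mU sU nzU; apply: s1 => //.
apply: mxmodule_transfer mU => x Gx; have [y Gy e] := h12 x Gx.
by exists y.
Qed.

Lemma satP_cl : GRing.decidable_field_axiom (fun e (f : GRing.formula R) => `[< GRing.holds e f >]).
Proof. move=> e f; exact: asboolP. Qed.
#[non_forgetful_inheritance]
HB.instance Definition _ := GRing.Field_isDecField.Build R satP_cl.

Lemma repr_pow gT (G : {group gT}) n (r : mx_representation R G n) x j :
  x \in G -> r (x ^+ j)%g = r x ^+ j.
Proof.
move=> Gx; elim: j => [|j IH]; first by rewrite expg0 expr0 repr_mx1.
by rewrite expgS repr_mxM ?groupX // IH exprS mulmxE.
Qed.

Lemma repr_fin_order gT (G : {group gT}) n (r : mx_representation R G n) x :
  x \in G -> r x ^+ #[x]%g = 1.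
Proof. by move=> Gx; rewrite -repr_pow // expg_order repr_mx1. Qed.

Lemma subg_subg_repr (F : fieldType) gT (G K H : {group gT}) n
  (rG : mx_representation F G n) (sKG : K \subset G) (sHK : H \subset K)
  (sHG : H \subset G) :
  subg_repr rG sHG = subg_repr (subg_repr rG sKG) sHK.
Proof.
rewrite /subg_repr.
by rewrite (Prop_irrelevance (subg_mx_repr rG sHG) (subg_mx_repr (subg_repr rG sKG) sHK)).
Qed.

Lemma core d : forall gT (H N : {group gT}) (rho : mx_representation R H d)
  (nNH : (N <| H)%g),
  odd d -> solvable N -> mx_irreducible (subg_repr rho (normal_sub nNH)) ->
  (exists2 g, g \in N & rho g != 1%:M) ->
  forall h, h \in H -> exists2 k, k \in N & eigenvalue (rho k *m rho h) 1.
Proof.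
elim/ltn_ind: d => d IH gT H N rho nNH oddd solN irrN [g0 Ng0 g0n1] h Hh.
have sNH := normal_sub nNH.
pose rN := subg_repr rho (normal_sub nNH).
have d0 : (0 < d)%N by rewrite lt0n; apply: contraTneq oddd => ->.
have exP : exists i, (N^`(i))%g \subset rker rho.
  by case/derivedP: solN => i Ni; exists i; rewrite Ni sub1G.
case: (ex_minnP exP) => i Pi mini.
have i0 : (0 < i)%N.
  case: i Pi mini => // Pi _; case/negP: g0n1; rewrite derg0 in Pi.
  by have /rkerP[_ ->] := subsetP Pi g0 Ng0.
pose A := (N^`(i.-1))%G.
have nAH : (A <| H)%g := char_normal_trans (der_char _ _) nNH.
have nsAN : (A <| N)%g := der_normal _ _.
have sAN : A \subset N := der_sub _ _.
have sAH : A \subset H := normal_sub nAH.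
have [a0 Aa0 a0n1] : exists2 a0, a0 \in A & rho a0 != 1%:M.
  have : ~~ (A \subset rker rho).
    by apply/negP => /mini; apply/negP; rewrite -ltnNge ltn_predL.
  case/subsetPn => a0 Aa0 na0; exists a0 => //; apply: contra na0 => /eqP e.
  by apply/rkerP; split => //; apply: (subsetP sAH).
have commA : forall a b, a \in A -> b \in A -> rho a *m rho b = rho b *m rho a.
  move=> a b Aa Ab; have Ha := subsetP sAH a Aa; have Hb := subsetP sAH b Ab.
  have Cab : [~ a, b]%g \in rker rho.
    apply: (subsetP Pi); rewrite -(prednK i0) dergSn; exact: mem_commg.
  have /rkerP[Hc rc] := Cab.
  have Hba : (b * a)%g \in H by rewrite groupM.
  rewrite -!repr_mxM // commgC (repr_mxM rho Hba Hc) rc mulmx1.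
  by [].
pose rA := subg_repr rN (normal_sub nsAN).
pose sA := DecSocleType rA.
have [M simM _] : exists2 M, mxsimple rA M & (M <= 1%:M)%MS.
  apply: contrapT; apply/classicP; apply: mxsimple_exists; first exact: mxmodule1.
  by rewrite -mxrank_eq0 mxrank1 -lt0n.
pose W1 : sA := PackSocle (component_socle sA simM).
have rkW := Clifford_rank_components irrN W1.
have tr := Clifford_atrans irrN sA.
have [t1 | t2] := leqP #|sA| 1.
  (* homogeneous case: a0 acts as -1 *)
  have [X sXN [defS dS]] := Clifford_basis irrN simM.
  have [modM nzM simMp] := simM.
  have oddM : odd (\rank M).
    have e : (\rank (\sum_(x in X) M *m rN x)%MS = d) by rewrite defS mxrank1.
    move: e; rewrite (mxdirectP dS) /= (eq_bigr (fun _ => \rank M)) => [|z Xz].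
      by rewrite sum_nat_const => e; move: oddd; rewrite -[in odd d]e oddM => /andP[].
    by rewrite mxrankMfree // row_free_unit; apply: repr_mx_unit; apply: (subsetP sNH); exact: (subsetP sXN).
  pose rM := submod_repr modM.
  have [mu mupm eigmu] : exists2 mu : R, (mu = 1 \/ mu = -1) & eigenvalue (rM a0) mu.
    have := odd_eig oddM (order_gt0 a0) (repr_fin_order rM Aa0).
    by case => e; [exists 1 | exists (-1)]; auto.
  move/eigenvalueP: eigmu => [w ew nw].
  pose v := val_submod w.
  have vM : (v <= M)%MS := val_submodP w.
  have nv : v != 0 by rewrite val_submod_eq0.
  have va0 : v *m rho a0 = mu *: v.
    by rewrite /v -(val_submodJ modM w Aa0) ew /val_submod /= scalemxAl.
  have modK : mxmodule rA (kermx (rho a0 - mu%:M)).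
    apply/mxmoduleP => a Aa; rewrite sub_kermx.
    have ec : rA a *m (rho a0 - mu%:M) = (rho a0 - mu%:M) *m rA a.
      by rewrite /= mulmxBr mulmxBl commA // scalar_mxC.
    by rewrite -mulmxA ec mulmxA mulmx_ker mul0mx.
  have modE := capmx_module modM modK.
  have vE : (v <= M :&: kermx (rho a0 - mu%:M))%MS.
    rewrite sub_capmx vM sub_kermx mulmxBr va0 /=.
    by rewrite -scalemx1 -scalemxAr mulmx1 subrr.
  have nzE : (M :&: kermx (rho a0 - mu%:M))%MS != 0.
    by apply: contraNneq nv => E0; move: vE; rewrite E0 submx0; exact: id.
  have MK : (M <= kermx (rho a0 - mu%:M))%MS.
    exact: submx_trans (simMp _ modE (capmxSl _ _) nzE) (capmxSr _ _).
  have CK : (component_mx rA M <= kermx (rho a0 - mu%:M))%MS.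
    have [I [U isoU ->]] := component_mx_def simM.
    apply/sumsmx_subP => j _; case: (isoU j) => f unitf homf eqU.
    rewrite -eqU sub_kermx mulmxBr.
    have := hom_mxP homf a0 Aa0; move=> /= <-.
    move: MK; rewrite sub_kermx mulmxBr subr_eq0 => /eqP ->.
    by rewrite -!mulmxA scalar_mxC subrr.
  have allK : (1%:M <= kermx (rho a0 - mu%:M))%MS.
    rewrite -(Clifford_Socle1 irrN sA); apply/sumsmx_subP => W _.
    have -> : W = W1 by apply/(fintype_le1P t1).
    by rewrite PackSocleK.
  have ea0 : rho a0 = mu%:M.
    by move: allK; rewrite sub_kermx mul1mx subr_eq0 => /eqP.
  have mum1 : mu = -1.
    by case: mupm => // mu1; case/eqP: a0n1; rewrite ea0 mu1.
  have := odd_eig oddd (order_gt0 h) (repr_fin_order rho Hh).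
  case=> eh.
    by exists 1%g; rewrite ?group1 // repr_mx1 mul1mx.
  exists a0; first exact: (subsetP sAN).
  move/eigenvalueP: eh => [u eu nu]; apply/eigenvalueP; exists u => //.
  by rewrite ea0 mum1 mul_scalar_mx -scalemxAr eu scalerA mulrNN mulr1.
pose rAH := subg_repr rho (normal_sub nAH).
have eA := subg_subg_repr rho (normal_sub nNH) (normal_sub nsAN) (normal_sub nAH).
have simBH : mxsimple rAH (socle_base W1) by rewrite /rAH eA; exact: socle_simple.
have Hhi : (h^-1)%g \in H by rewrite groupV.
have simBh := Clifford_simple simBH Hhi.
have cJ := Clifford_componentJ simBH Hhi.
rewrite eA in simBh cJ.
pose W' : sA := PackSocle (component_socle sA simBh).
have eW' : ((W' : 'M_d) :=: (W1 : 'M_d) *m rho (h^-1)%g)%MS.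
  by rewrite PackSocleK; exact: cJ.
have : W' \in orbit (Clifford_action sA) N W1 by rewrite (atransPin (subxx _) tr (in_setT W1)) ?inE.
case/orbitP => y Ny eyW.
have Hy := subsetP sNH y Ny.
have eW'' := val_Clifford_act W1 Ny; rewrite eyW in eW''.
pose x := (y * h)%g.
have Hx : x \in H by rewrite groupM.
have eWx : ((W1 : 'M_d) *m rho x :=: (W1 : 'M_d))%MS.
  rewrite repr_mxM // mulmxA.
  apply: eqmx_trans (eqmxMr _ (eqmx_trans (eqmx_sym eW'') eW')) _.
  by rewrite -mulmxA -repr_mxM // mulVg repr_mx1 mulmx1.
pose H1 := rstabs_group rho (W1 : 'M_d).
pose N1 := rstabs_group rN (W1 : 'M_d).
have Hx1 : x \in H1 by rewrite inE Hx /= eWx.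
have eN1 : (N1 : {set gT}) = H1 :&: N.
  apply/setP => z; rewrite !inE /=.
  by case Nz: (z \in N); rewrite ?andbF ?andbT //= (subsetP sNH z Nz).
have nN1H1 : (N1 <| H1)%g by rewrite eN1; apply: normalGI (rstabs_sub _ _) nNH.
have sN1N : N1 \subset N by rewrite eN1 subsetIr.
have modW1 : mxmodule (subg_repr rho (rstabs_sub rho (W1 : 'M_d))) (W1 : 'M_d).
  by apply/mxmoduleP => z; rewrite inE => /andP[_ ->].
pose rho1 := submod_repr modW1.
have rkW1pos : (0 < \rank (W1 : 'M_d))%N by rewrite lt0n mxrank_eq0 nz_socle.
have rkW1lt : (\rank (W1 : 'M_d) < d)%N by have := ltn_Pmull t2 rkW1pos; rewrite rkW.
have oddW1 : odd (\rank (W1 : 'M_d)) by move: oddd; rewrite -[in odd d]rkW oddM => /andP[].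
have solN1 : solvable N1 := solvableS sN1N solN.
have irr1 : mx_irreducible (subg_repr rho1 (normal_sub nN1H1)).
  have s := Clifford_rstabs_simple irrN W1.
  have [modW1' _ _] := s.
  have irr' := (submod_mx_irr modW1').2 s.
  by apply: irr_transfer irr' => z Nz; exists z.
have sN1H1 := normal_sub nN1H1.
have nontriv1 : exists2 g, g \in N1 & rho1 g != 1%:M.
  apply: contrapT => hn.
  have all1 : forall g, g \in N1 -> rho1 g = 1%:M.
    by move=> g Ng; apply: contrapT => ng; apply: hn; exists g => //; apply/eqP.
  have W1ker : forall g, g \in N1 -> ((W1 : 'M_d) <= kermx (rho g - 1%:M))%MS.
    move=> g Ng; have Hg : g \in H1 := subsetP sN1H1 g Ng.
    have := val_submodJ modW1 1%:M Hg; rewrite all1 // mulmx1 => e.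
    apply: submx_trans (_ : _ <= val_submod (1%:M : 'M_(\rank (W1 : 'M_d))))%MS _.
      by rewrite val_submod1.
    by rewrite sub_kermx mulmxBr mulmx1 -e subrr.
  have AN1 : forall a, a \in A -> a \in N1.
    move=> a Aa; rewrite inE (subsetP sAN a Aa) /=.
    exact: (mxmoduleP (component_mx_module rA (socle_base W1))).
  have allA : forall a, a \in A -> rho a = 1%:M.
    move=> a Aa; apply/eqP; rewrite -subr_eq0 -(mul1mx (rho a - 1%:M)).
    rewrite -sub_kermx.
    apply: submx_trans (_ : 1%:M <= Socle sA)%MS _; first by rewrite (Clifford_Socle1 irrN sA).
    apply/sumsmx_subP => W _.
    have : W \in orbit (Clifford_action sA) N W1.
      by rewrite (atransPin (subxx _) tr (in_setT W1)) ?inE.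
    case/orbitP => z Nz <-.
    rewrite val_Clifford_act //.
    have Hz := subsetP sNH z Nz.
    have Aa' : (a ^ z^-1)%g \in A.
      by rewrite memJ_norm // groupV (subsetP (normal_norm nsAN)).
    have HAa' := subsetP sAH _ Aa'.
    have Ha := subsetP sAH _ Aa.
    have e : rho z *m rho a = rho (a ^ z^-1)%g *m rho z.
      rewrite -!repr_mxM //; congr (rho _).
      by rewrite conjgE invgK mulgA mulgKV.
    have e2 : rho z *m (rho a - 1%:M) = (rho (a ^ z^-1)%g - 1%:M) *m rho z.
      by rewrite mulmxBr mulmxBl e mulmx1 mul1mx.
    have h0 : (W1 : 'M_d) *m (rho (a ^ z^-1)%g - 1%:M) = 0.
      by apply/eqP; rewrite -sub_kermx; apply: W1ker; apply: AN1.
    rewrite sub_kermx /=; apply/eqP; rewrite -mulmxA.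
    transitivity ((W1 : 'M_d) *m ((rho (a ^ z^-1)%g - 1%:M) *m rho z)).
      by congr (_ *m _); exact: e2.
    by rewrite mulmxA; apply: (etrans (congr1 (mulmx^~ (rho z)) h0)); exact: mul0mx.
  by move/eqP: a0n1; apply; apply: allA.
have [k Nk eig] := IH _ rkW1lt gT H1 N1 rho1 nN1H1 oddW1 solN1 irr1 nontriv1 x Hx1.
have H1k := subsetP sN1H1 k Nk.
exists (k * y)%g; first by rewrite groupM // (subsetP sN1N).
move/eigenvalueP: eig => [w ew nw]; apply/eigenvalueP.
exists (val_submod w); last by rewrite val_submod_eq0.
have ew' : w *m rho1 (k * x)%g = w by rewrite repr_mxM // ew scale1r.
have := val_submodJ modW1 w (groupM H1k Hx1); rewrite ew' => e.
have Hk : k \in H := subsetP (rstabs_sub rho _) k H1k.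
rewrite -repr_mxM ?groupM // -mulgA scale1r.
exact: (esym e).
Qed.

Lemma main_lemma gT (G : {group gT}) : solvable G -> eigenvalue_one_property R G.
Proof.
move=> solG n sigma oddn irr [g0 Gg0 ng0] m mU fwd _ [k0 k0pos mk0].
pose d := n.+1.
have fwdm : forall g, g \in G -> exists2 h, h \in G & m *m sigma g = sigma h *m m.
  move=> g Gg; have [h Gh e] := fwd g Gg; exists h => //.
  by rewrite -e -[RHS]mulmxA mulVmx // mulmx1.
have fwdj : forall j g, g \in G -> exists2 h, h \in G & m ^+ j *m sigma g = sigma h *m m ^+ j.
  elim=> [|j IHj] g Gg; first by exists g => //; rewrite expr0 mul1mx mulmx1.
  have [h Gh e] := IHj g Gg; have [h' Gh' e'] := fwdm h Gh.
  exists h' => //; rewrite exprS -mulmxE -mulmxA e mulmxA e' -mulmxA.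
  by rewrite mulmxE -exprS.
have mmod : forall j, m ^+ j = m ^+ (j %% k0).
  move=> j; rewrite {1}(divn_eq j k0) exprD mulnC exprM mk0 expr1n mul1r //.
pose S := [seq sigma g *m m ^+ j | g <- enum G, j <- iota 0 k0].
have memS : forall g j, g \in G -> sigma g *m m ^+ j \in S.
  move=> g j Gg; rewrite mmod; apply/allpairsP; exists (g, (j %% k0)%N) => /=.
  by rewrite mem_enum mem_iota ltn_mod k0pos.
have memSP : forall A, A \in S -> exists2 g, g \in G & exists j, A = sigma g *m m ^+ j.
  move=> A /allpairsP [[g j] /= [Gg _ ->]]; exists g; first by rewrite mem_enum in Gg.
  by exists j.
have S1 : 1%:M \in S by have := memS 1%g 0%N (group1 G); rewrite repr_mx1 expr0 mul1mx.
have Sm : m \in S by have := memS 1%g 1%N (group1 G); rewrite repr_mx1 expr1 mul1mx.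
have Smul : forall A B, A \in S -> B \in S -> A *m B \in S.
  move=> A B /memSP[g Gg [i ->]] /memSP[g' Gg' [j ->]].
  have [h Gh e] := fwdj i g' Gg'.
  have -> : sigma g *m m ^+ i *m (sigma g' *m m ^+ j) = sigma (g * h)%g *m (m ^+ i *m m ^+ j).
    by rewrite repr_mxM // -!mulmxA; congr (_ *m _); rewrite !mulmxA e.
  by rewrite mulmxE -exprD; apply: memS; rewrite groupM.
have Sunit : forall A, A \in S -> A \in unitmx.
  move=> A /memSP[g Gg [j ->]]; rewrite unitmx_mul repr_mx_unit //=.
  exact: (unitrX j mU).
have memSg : forall g, g \in G -> sigma g \in S.
  by move=> g Gg; have := memS g 0%N Gg; rewrite expr0 mulmx1.
pose T := seq_sub S.
pose e0 : T := @SeqSub _ S 1%:M S1.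
have rmulP : forall (x s : T), (ssval x *m ssval s) \in S.
  by move=> x s; apply: Smul; apply: ssvalP.
pose rmul (s : T) : T -> T := fun x => SeqSub (rmulP x s).
have rmul_inj : forall s, injective (rmul s).
  move=> s x y /(congr1 val) /= e; apply: val_inj => /=.
  have U := Sunit _ (ssvalP s).
  by rewrite -[ssval x](mulmxK U) e mulmxK.
pose phi (s : T) : {perm T} := perm (rmul_inj s).
have phiE : forall s x, ssval (phi s x) = ssval x *m ssval s by move=> s x; rewrite permE.
pose comp (s s' : T) : T := SeqSub (rmulP s s').
have phiM : forall s s', (phi s * phi s')%g = phi (comp s s').
  by move=> s s'; apply/permP => x; apply: val_inj; rewrite /= permM !phiE /= mulmxA.
have phi1 : phi e0 = 1%g.
  by apply/permP => x; apply: val_inj; rewrite /= phiE perm1 /= mulmx1.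
pose Phi := [set phi s | s : T].
have gPhi : group_set Phi.
  apply/group_setP; split; first by apply/imsetP; exists e0.
  by move=> p q /imsetP[s _ ->] /imsetP[s' _ ->]; rewrite phiM; apply/imsetP; exists (comp s s').
pose HG := Group gPhi.
pose rho0 (p : {perm T}) : 'M[R]_d := ssval (p e0).
have rhophi : forall s, rho0 (phi s) = ssval s by move=> s; rewrite /rho0 phiE /= mul1mx.
have rhoR : mx_repr HG rho0.
  split; first by rewrite /rho0 perm1.
  by move=> p q /imsetP[s _ ->] /imsetP[s' _ ->]; rewrite phiM !rhophi.
pose rho := MxRepresentation rhoR.
pose io (A : 'M[R]_d) : T := insubd e0 A.
have ioK : forall A, A \in S -> val (io A) = A by move=> A SA; rewrite /io insubdK.
pose f (g : gT) : {perm T} := phi (io (sigma g)).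
have fM : {in G &, {morph f : x y / (x * y)%g}}.
  move=> x y Gx Gy; rewrite /f phiM; congr phi; apply: val_inj.
  by rewrite /= !ioK ?memSg ?groupM // repr_mxM.
pose fm : {morphism G >-> {perm T}} := Morphism fM.
pose N := (fm @* G)%G.
have rhof : forall g, g \in G -> rho (fm g) = sigma g.
  by move=> g Gg; rewrite /= rhophi ioK ?memSg.
have NP : forall p, p \in N -> exists2 g, g \in G & p = fm g.
  by move=> p; rewrite /N /= morphimEdom => /imsetP[g Gg ->]; exists g.
have fN : forall g, g \in G -> fm g \in N.
  by move=> g Gg; rewrite mem_morphim.
have sNH : N \subset HG.
  by apply/subsetP => p /NP[g Gg ->]; apply/imsetP; exists (io (sigma g)).
have nNH : (N <| HG)%g.
  apply/normalP; split => // q Hq.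
  apply/eqP; rewrite eqEcard cardJg leqnn andbT.
  apply/subsetP => z /imsetP[p Np ->].
  have Hqi : (q^-1)%g \in HG by rewrite groupV.
  have /imsetP[s _ qis] := Hqi.
  have /memSP[g Gg [j sj]] := ssvalP s.
  have [g' Gg' ->] := NP p Np.
  have [g1 Gg1 e1] := fwdj j g' Gg'.
  pose g'' := (g * g1 * g^-1)%g.
  have Gg'' : g'' \in G by rewrite !groupM ?groupV.
  have comm : (q^-1 * fm g')%g = (fm g'' * q^-1)%g.
    rewrite qis /= /f !phiM; congr phi; apply: val_inj => /=.
    rewrite !ioK ?memSg // sj -mulmxA e1 !mulmxA -!repr_mxM ?groupM ?groupV //.
    by rewrite /g'' -mulgA mulVg mulg1.
  have -> : (fm g' ^ q)%g = fm g''.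
    by rewrite conjgE mulgA comm mulgKV.
  exact: fN.
have irrN : mx_irreducible (subg_repr rho (normal_sub nNH)).
  apply: irr_transfer irr => [x Gx | y Ny].
    by exists (fm x); [apply: fN | symmetry; exact: rhof].
  by have [x Gx ->] := NP y Ny; exists x => //; symmetry; exact: rhof.
have solN : solvable N by rewrite /N /= morphim_sol.
have nontriv : exists2 g, g \in N & rho g != 1%:M.
  by exists (fm g0); [apply: fN | rewrite (rhof g0 Gg0)].
have Hh0 : phi (io m) \in HG by apply/imsetP; exists (io m).
have [k Nk eig] := core oddn solN irrN nontriv Hh0.
have [g Gg ek] := NP k Nk.
exists g => //.
have e1 : rho k = sigma g by rewrite ek; exact: rhof.
have e2 : rho (phi (io m)) = m by rewrite /= rhophi ioK.
by move: eig; rewrite e1 e2.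
Qed.
End S.

Theorem corollary3p2p4 (R : realType) (gT : finGroupType) (G : {group gT}) :
  solvable G -> eigenvalue_one_property R G.
Proof. exact: main_lemma. Qed.
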